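(* Let $R$ be a ring and let $(\mathcal{T},\mathcal{F})$ be a torsion pair in $\mathrm{Mod}\text{-}R$ with torsion radical $t$. Then $(\mathcal{T},\mathcal{F})$ is elementary if and only if $t$, regarded as a functor $\mathrm{Mod}\text{-}R\to\mathrm{Ab}$, is coherent. Equivalently, $t=\tau(-)$ is definable by a positive primitive formula $\tau(u)$ of the language $\mathcal{L}(R)$ of right $R$-modules (i.e. $t(M)=\tau(M)$ for every module $M$), and then the torsion class $\mathcal{T}$ is the class of right $R$-modules satisfying $\forall u\,\tau(u)$ and the torsion free class $\mathcal{F}$ is the class of right $R$-modules satisfying $\forall u\,(\tau(u)\to u\doteq 0)$; in particular both $\mathcal{T}$ and $\mathcal{F}$ are finitely axiomatizable (relative to the theory of right $R$-modules).
   Context: A full subcategory of $\mathrm{Mod}\text{-}R$ is definable if it is closed under direct products, pure submodules and direct limits. A torsion pair $(\mathcal{T},\mathcal{F})$ in $\mathrm{Mod}\text{-}R$ is elementary if both $\mathcal{T}$ and $\mathcal{F}$ are definable. The torsion radical $t$ assigns to a module $M$ its largest submodule lying in $\mathcal{T}$. An additive functor $\mathrm{Mod}\text{-}R\to\mathrm{Ab}$ is coherent if it commutes with direct limits and direct products. $\mathcal{L}(R)=(+,-,0,r)_{r\in R}$ is the language of right $R$-modules; for a formula $\tau(u)$, $\tau(M)$ denotes the subgroup of elements of $M$ satisfying it. *)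

(* Defs.v *)
(* Right R-modules are modelled as left modules over the
   converse ring R^c: the right action  x . r  is  (r : R^c) *: x. *)
From HB Require Import structures.
From mathcomp Require Import all_boot all_algebra.

Set Implicit Arguments.
Unset Strict Implicit.
Unset Printing Implicit Defensive.

Import GRing.Theory.
Local Open Scope ring_scope.

Definition rmodType (R : nzRingType) := lmodType R^c.

Section Defs.
Variable R : nzRingType.
Local Notation Mod := (rmodType R).

Definition ract (M : Mod) (x : M) (r : R) : M := (r : R^c) *: x.

Definition is_hom (M N : Mod) (f : M -> N) : Prop :=
  (forall x y, f (x + y) = f x + f y) /\ (forall (r : R) x, f (ract x r) = ract (f x) r).

Definition torsion_pair (T F : Mod -> Prop) : Prop :=
  (forall M : Mod, T M <->
     (forall N : Mod, F N -> forall f : M -> N, is_hom f -> forall x, f x = 0)) /\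
  (forall N : Mod, F N <->
     (forall M : Mod, T M -> forall f : M -> N, is_hom f -> forall x, f x = 0)).

(* t is the torsion radical of T: t M is the largest submodule of M lying in T
   (a submodule lies in T iff it is the image of an injective hom from a
   module in T). *)
Definition torsion_radical (T : Mod -> Prop) (t : forall M : Mod, M -> Prop) : Prop :=
  forall M : Mod,
    (exists (X : Mod) (i : X -> M), [/\ T X, is_hom i, injective i &
        forall x, t M x <-> exists y, i y = x]) /\
    (forall (X : Mod) (i : X -> M), T X -> is_hom i -> injective i ->
        forall y, t M (i y)).

Definition is_product (I : Type) (M : I -> Mod) (P : Mod) (p : forall i, P -> M i) : Prop :=
  (forall i, is_hom (p i)) /\
  (forall (Q : Mod) (q : forall i, Q -> M i), (forall i, is_hom (q i)) ->
     exists! h : Q -> P, is_hom h /\ (forall i x, p i (h x) = q i x)).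

Definition directed_system (I : Type) (le : I -> I -> Prop) (M : I -> Mod)
    (f : forall i j, le i j -> M i -> M j) : Prop :=
  [/\ (forall i, le i i), (forall i j k, le i j -> le j k -> le i k),
      inhabited I, (forall i j, exists k, le i k /\ le j k) &
      [/\ (forall i j (h : le i j), is_hom (f i j h)),
          (forall i (h : le i i) x, f i i h x = x) &
          (forall i j k (hij : le i j) (hjk : le j k) (hik : le i k) x,
             f j k hjk (f i j hij x) = f i k hik x)]].

Definition is_direct_limit (I : Type) (le : I -> I -> Prop) (M : I -> Mod)
    (f : forall i j, le i j -> M i -> M j) (L : Mod) (g : forall i, M i -> L) : Prop :=
  [/\ (forall i, is_hom (g i)),
      (forall i j (h : le i j) x, g j (f i j h x) = g i x) &
      (forall (Q : Mod) (q : forall i, M i -> Q), (forall i, is_hom (q i)) ->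
         (forall i j (h : le i j) x, q j (f i j h x) = q i x) ->
         exists! u : L -> Q, is_hom u /\ (forall i x, u (g i x) = q i x))].

Definition pure_in (M : Mod) (S : M -> Prop) : Prop :=
  forall (m n : nat) (r : 'I_m -> 'I_n -> R) (s : 'I_n -> M),
    (forall k, S (s k)) ->
    (exists x : 'I_m -> M, forall k, \sum_(j < m) ract (x j) (r j k) = s k) ->
    exists x : 'I_m -> M, (forall j, S (x j)) /\
                          (forall k, \sum_(j < m) ract (x j) (r j k) = s k).

Definition definable (C : Mod -> Prop) : Prop :=
  [/\ (forall (I : Type) (M : I -> Mod) (P : Mod) (p : forall i, P -> M i),
         @is_product I M P p -> (forall i, C (M i)) -> C P),
      (forall (M N : Mod) (i : N -> M), C M -> is_hom i -> injective i ->
         pure_in (fun x => exists y, i y = x) -> C N) &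
      (forall (I : Type) (le : I -> I -> Prop) (M : I -> Mod)
              (f : forall i j, le i j -> M i -> M j) (L : Mod) (g : forall i, M i -> L),
         @directed_system I le M f -> @is_direct_limit I le M f L g -> (forall i, C (M i)) -> C L)].

Definition elementary (T F : Mod -> Prop) : Prop := definable T /\ definable F.

(* The subfunctor t : Mod-R -> Ab (t(f) = restriction of f) is coherent: the
   canonical comparison maps for products and direct limits are bijective.
   Products/directed colimits in Ab are described concretely. *)
Definition coherent_subfunctor (t : forall M : Mod, M -> Prop) : Prop :=
  (forall (I : Type) (M : I -> Mod) (P : Mod) (p : forall i, P -> M i),
     @is_product I M P p ->
     (forall x y, t P x -> t P y -> (forall i, p i x = p i y) -> x = y) /\
     (forall y : forall i, M i, (forall i, t (M i) (y i)) ->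
        exists x, t P x /\ forall i, p i x = y i)) /\
  (forall (I : Type) (le : I -> I -> Prop) (M : I -> Mod)
          (f : forall i j, le i j -> M i -> M j) (L : Mod) (g : forall i, M i -> L),
     @directed_system I le M f -> @is_direct_limit I le M f L g ->
     (forall x, t L x -> exists i y, t (M i) y /\ g i y = x) /\
     (forall i j (y : M i) (y' : M j), t (M i) y -> t (M j) y' -> g i y = g j y' ->
        exists k (hik : le i k) (hjk : le j k), f i k hik y = f j k hjk y')).

End Defs.

(* positive primitive formulas tau(u) of L(R) in one free variable u, in the
   normal form  exists w_1..w_m, /\_{k<n} ( u.a_k + sum_j w_j.b_{jk} = 0 ). *)
Record ppf (R : nzRingType) := PPF {
  pp_m : nat; pp_n : nat;
  pp_a : 'I_pp_n -> R;
  pp_b : 'I_pp_m -> 'I_pp_n -> R }.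

Definition pp_holds (R : nzRingType) (tau : ppf R) (M : rmodType R) (u : M) : Prop :=
  exists w : 'I_(pp_m tau) -> M, forall k : 'I_(pp_n tau),
    ract u (@pp_a R tau k) + \sum_(j < pp_m tau) ract (w j) (@pp_b R tau j k) = 0.

(* Main.v *)
From HB Require Import structures.
Require Import Defs.
From mathcomp Require Import all_boot all_algebra.
From mathcomp Require Import boolp.
Set Implicit Arguments. Unset Strict Implicit. Unset Printing Implicit Defensive.
Import GRing.Theory.
Local Open Scope ring_scope.

Section MkMod.
Variables (R : nzRingType) (X : Type) (z : X) (opp : X -> X) (add : X -> X -> X) (sc : X -> R -> X).
Hypotheses (hA : associative add) (hC : commutative add) (h0 : left_id z add)
  (hN : left_inverse z opp add)
  (hsA : forall v a b, sc (sc v b) a = sc v (b * a))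
  (hs1 : forall v, sc v 1 = v)
  (hsDr : forall a u v, sc (add u v) a = add (sc u a) (sc v a))
  (hsDl : forall v a b, sc v (a + b) = add (sc v a) (sc v b)).
Definition mkT : Type := X.
HB.instance Definition _ := gen_eqMixin mkT.
HB.instance Definition _ := gen_choiceMixin mkT.
HB.instance Definition _ := GRing.isZmodule.Build mkT hA hC h0 hN.
Definition mksc (r : R^c) (x : mkT) : mkT := sc x r.
Lemma mk_scA a b v : mksc a (mksc b v) = mksc (a * b) v.
Proof. exact: hsA. Qed.
Lemma mk_sc1 : left_id (1 : R^c) mksc. Proof. exact: hs1. Qed.
Lemma mk_scDr : right_distributive mksc (@GRing.add mkT). Proof. move=> a u v; exact: hsDr. Qed.
Lemma mk_scDl v : {morph mksc^~ v : a b / a + b >-> (a + b : mkT)}.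
Proof. move=> a b; exact: hsDl. Qed.
HB.instance Definition _ := GRing.Zmodule_isLmodule.Build R^c mkT mk_scA mk_sc1 mk_scDr mk_scDl.
Definition mkMod : rmodType R := mkT.
Lemma mk_addE (x y : mkMod) : x + y = add x y. Proof. by []. Qed.
Lemma mk_zeroE : (0 : mkMod) = z. Proof. by []. Qed.
Lemma mk_oppE (x : mkMod) : - x = opp x. Proof. by []. Qed.
Lemma mk_ractE (x : mkMod) r : ract x r = sc x r. Proof. by []. Qed.
End MkMod.

Section Basics.
Variable R : nzRingType.
Local Notation Mod := (rmodType R).

Lemma ractDl (M : Mod) (x y : M) r : ract (x + y) r = ract x r + ract y r.
Proof. by rewrite /ract scalerDr. Qed.
Lemma ractDr (M : Mod) (x : M) r s : ract x (r + s) = ract x r + ract x s.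
Proof. by rewrite /ract scalerDl. Qed.
Lemma ractA (M : Mod) (x : M) r s : ract (ract x r) s = ract x (r * s).
Proof. by rewrite /ract scalerA. Qed.
Lemma ract1 (M : Mod) (x : M) : ract x 1 = x.
Proof. by rewrite /ract scale1r. Qed.
Lemma ract0 (M : Mod) (x : M) : ract x 0 = 0.
Proof. by rewrite /ract scale0r. Qed.
Lemma ract0l (M : Mod) r : ract (0 : M) r = 0.
Proof. by rewrite /ract scaler0. Qed.
Lemma ractNl (M : Mod) (x : M) r : ract (- x) r = - ract x r.
Proof. by rewrite /ract scalerN. Qed.
Lemma ractNr (M : Mod) (x : M) r : ract x (- r) = - ract x r.
Proof. by rewrite /ract scaleNr. Qed.
Lemma ract_suml (M : Mod) (I : Type) (s : seq I) (P : pred I) (F : I -> M) r :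
  ract (\sum_(i <- s | P i) F i) r = \sum_(i <- s | P i) ract (F i) r.
Proof. by rewrite /ract scaler_sumr. Qed.
Lemma ract_sumr (M : Mod) (I : Type) (s : seq I) (P : pred I) (F : I -> R) (x : M) :
  ract x (\sum_(i <- s | P i) F i) = \sum_(i <- s | P i) ract x (F i).
Proof. by rewrite /ract scaler_suml. Qed.

Section Hom.
Variables (M N : Mod) (f : M -> N) (hf : is_hom f).
Lemma homD x y : f (x + y) = f x + f y. Proof. exact: hf.1. Qed.
Lemma homZ x r : f (ract x r) = ract (f x) r. Proof. exact: hf.2. Qed.
Lemma hom0 : f 0 = 0.
Proof. by apply: (addrI (f 0)); rewrite -homD !addr0. Qed.
Lemma homN x : f (- x) = - f x.
Proof. by apply: (addrI (f x)); rewrite -homD !subrr hom0. Qed.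
Lemma homB x y : f (x - y) = f x - f y.
Proof. by rewrite homD homN. Qed.
Lemma hom_sum (I : Type) (s : seq I) (P : pred I) (F : I -> M) :
  f (\sum_(i <- s | P i) F i) = \sum_(i <- s | P i) f (F i).
Proof. exact: (big_morph f homD hom0). Qed.
End Hom.

Lemma hom_comp (M N Q : Mod) (f : M -> N) (g : N -> Q) :
  is_hom f -> is_hom g -> is_hom (g \o f).
Proof. by move=> hf hg; split=> * /=; rewrite ?(homD hf, homD hg, homZ hf, homZ hg). Qed.
Lemma hom_id (M : Mod) : is_hom (@id M). Proof. by []. Qed.
Lemma hom_zero (M N : Mod) : is_hom (fun _ : M => (0 : N)).
Proof. by split=> *; rewrite ?addr0 ?ract0l. Qed.

Definition Rm : Mod := @mkMod R R 0 (fun x => - x) +%R *%R (@addrA R) (@addrC R)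
  (@add0r R) (@addNr R) (fun v a b => esym (mulrA v b a)) (@mulr1 R)
  (fun a u v => mulrDl u v a) (fun v a b => mulrDr v a b).

Lemma hom_ract (M : Mod) (x : M) : is_hom (fun r : Rm => ract x r).
Proof. by split=> *; rewrite ?ractDr // ractA. Qed.

Lemma Rm_one (M : Mod) (x : M) : ract x (1 : Rm) = x.
Proof. exact: ract1. Qed.

Lemma unique_hom (P Q : Mod) (C : (P -> Q) -> Prop) (h1 h2 : P -> Q) :
  (exists! h, is_hom h /\ C h) -> is_hom h1 -> C h1 -> is_hom h2 -> C h2 -> h1 = h2.
Proof. by move=> [h [_ U]] ? ? ? ?; rewrite -(U h1) // -(U h2). Qed.

Section Product.
Variables (I : Type) (M : I -> Mod) (P : Mod) (p : forall i, P -> M i).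
Hypothesis hP : is_product p.

Lemma prod_exists (y : forall i, M i) : exists x, forall i, p i x = y i.
Proof.
have [h [[hh hc] _]] := hP.2 Rm (fun i r => ract (y i) r) (fun i => hom_ract (y i)).
by exists (h 1) => i; rewrite hc ract1.
Qed.

Lemma prod_ext (x x' : P) : (forall i, p i x = p i x') -> x = x'.
Proof.
move=> e.
have U := hP.2 Rm (fun i r => ract (p i x) r) (fun i => hom_ract (p i x)).
have := unique_hom U (hom_ract x) _ (hom_ract x') _.
move=> /(_ _ _) /(congr1 (fun h => h 1)); rewrite !ract1; apply.
- by move=> i r; rewrite (homZ (hP.1 i)).
- by move=> i r; rewrite (homZ (hP.1 i)) e.
Qed.
End Product.

Lemma pp_hom (tau : ppf R) (M N : Mod) (f : M -> N) (x : M) :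
  is_hom f -> pp_holds tau x -> pp_holds tau (f x).
Proof.
move=> hf [w hw]; exists (fun j => f (w j)) => k.
have -> : \sum_(j < pp_m tau) ract (f (w j)) (pp_b j k) =
  f (\sum_(j < pp_m tau) ract (w j) (pp_b j k)).
  by rewrite (hom_sum hf); apply: eq_bigr => j _; rewrite (homZ hf).
by rewrite -(homZ hf) -(homD hf) hw (hom0 hf).
Qed.

End Basics.


Section TQ.
Variables (X : Type) (E : X -> X -> Prop).
Hypotheses (Er : forall x, E x x) (Es : forall x y, E x y -> E y x)
  (Et : forall x y z, E x y -> E y z -> E x z).
Definition tq := {P : X -> Prop | exists x, P = E x}.
Definition cls (x : X) : tq := exist _ (E x) (ex_intro _ x erefl).
Definition rep (q : tq) : X := proj1_sig (cid (proj2_sig q)).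
Lemma clsK q : cls (rep q) = q.
Proof.
case: q => P hP; rewrite /rep /cls /=; case: (cid hP) => x /= e.
by apply: eq_exist; rewrite e.
Qed.
Lemma cls_eq x y : cls x = cls y <-> E x y.
Proof.
split.
  by move/(congr1 (@proj1_sig _ _)) => /= ->; apply: Er.
move=> h; apply: eq_exist; apply/funext => z; apply/propext; split.
  by move=> ?; apply: Et (Es h) _.
by move=> ?; apply: Et h _.
Qed.
Lemma cls_rep x : E (rep (cls x)) x.
Proof. by apply/cls_eq; rewrite clsK. Qed.
Lemma tq_ind (P : tq -> Prop) : (forall x, P (cls x)) -> forall q, P q.
Proof. by move=> h q; rewrite -(clsK q). Qed.
Lemma cls_surj q : exists x, q = cls x.
Proof. by exists (rep q); rewrite clsK. Qed.
End TQ.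

Section Sub.
Variable R : nzRingType.
Local Notation Mod := (rmodType R).

Definition is_sub (M : Mod) (S : M -> Prop) :=
  [/\ S 0, (forall x y, S x -> S y -> S (x + y)), (forall x, S x -> S (- x)) &
      (forall x r, S x -> S (ract x r))].

Section MQ.
Variables (M : Mod) (S : M -> Prop) (hS : is_sub S).
Definition qE (x y : M) := S (x - y).
Local Notation E := qE.
Lemma qEr x : E x x. Proof. by rewrite /qE subrr; case: hS. Qed.
Lemma qEs x y : E x y -> E y x.
Proof. by rewrite /qE => h; rewrite -opprB; have [_ _ hN _] := hS; apply: hN. Qed.
Lemma qEt x y z : E x y -> E y z -> E x z.
Proof.
rewrite /qE => h1 h2; have -> : x - z = (x - y) + (y - z) by rewrite addrA subrK.
by have [_ hD _ _] := hS; apply: hD.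
Qed.
Definition qT := tq E.
Local Notation Q := qT.
Definition qcls : M -> Q := cls E.
Definition qrep : Q -> M := @rep M E.
Lemma qrepE x : S (qrep (qcls x) - x). Proof. exact: (cls_rep qEr qEs qEt). Qed.
Definition qz : Q := qcls 0.
Definition qadd (a b : Q) : Q := qcls (qrep a + qrep b).
Definition qopp (a : Q) : Q := qcls (- qrep a).
Definition qsc (a : Q) (r : R) : Q := qcls (ract (qrep a) r).
Lemma ceq x y : S (x - y) -> qcls x = qcls y.
Proof. by move=> h; apply/(cls_eq qEr qEs qEt). Qed.
Lemma qaddE x y : qadd (qcls x) (qcls y) = qcls (x + y).
Proof.
apply: ceq; have -> : qrep (qcls x) + qrep (qcls y) - (x + y) =
  (qrep (qcls x) - x) + (qrep (qcls y) - y) by rewrite opprD addrACA.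
by have [_ hD _ _] := hS; apply: hD; apply: qrepE.
Qed.
Lemma qoppE x : qopp (qcls x) = qcls (- x).
Proof.
apply: ceq; rewrite -opprD; have [_ _ hN _] := hS; apply: hN; exact: qrepE.
Qed.
Lemma qscE x r : qsc (qcls x) r = qcls (ract x r).
Proof.
apply: ceq; rewrite -ractNl -ractDl; have [_ _ _ hZ] := hS; apply: hZ; exact: qrepE.
Qed.
Lemma ind (P : Q -> Prop) : (forall x, P (qcls x)) -> forall q, P q.
Proof. exact: tq_ind. Qed.
Lemma qA : associative qadd.
Proof. by move=> a b c; elim/ind: a => x; elim/ind: b => y; elim/ind: c => z; rewrite !qaddE addrA. Qed.
Lemma qC : commutative qadd.
Proof. by move=> a b; elim/ind: a => x; elim/ind: b => y; rewrite !qaddE addrC. Qed.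
Lemma q0 : left_id qz qadd.
Proof. by move=> a; elim/ind: a => x; rewrite /qz qaddE add0r. Qed.
Lemma qN : left_inverse qz qopp qadd.
Proof. by move=> a; elim/ind: a => x; rewrite qoppE qaddE addNr. Qed.
Lemma qsA v a b : qsc (qsc v b) a = qsc v (b * a).
Proof. by elim/ind: v => x; rewrite !qscE ractA. Qed.
Lemma qs1 v : qsc v 1 = v.
Proof. by elim/ind: v => x; rewrite !qscE ract1. Qed.
Lemma qsDr a u v : qsc (qadd u v) a = qadd (qsc u a) (qsc v a).
Proof. by elim/ind: u => x; elim/ind: v => y; rewrite !(qscE, qaddE) ractDl. Qed.
Lemma qsDl v a b : qsc v (a + b) = qadd (qsc v a) (qsc v b).
Proof. by elim/ind: v => x; rewrite !(qscE, qaddE) ractDr. Qed.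
Definition quotM : Mod := mkMod qA qC q0 qN qsA qs1 qsDr qsDl.
Definition proj (x : M) : quotM := qcls x.
Lemma proj_hom : is_hom proj.
Proof. by split=> *; rewrite /proj ?mk_addE ?mk_ractE ?qaddE ?qscE. Qed.
Lemma proj_eq x y : proj x = proj y <-> S (x - y).
Proof. exact: (cls_eq qEr qEs qEt). Qed.
Lemma proj0 x : proj x = 0 <-> S x.
Proof. by rewrite mk_zeroE /qz -/(proj 0) proj_eq subr0. Qed.
Lemma proj_surj (q : quotM) : exists x, q = proj x.
Proof. exact: cls_surj. Qed.
Lemma quot_ind (P : quotM -> Prop) : (forall x, P (proj x)) -> forall q, P q.
Proof. exact: ind. Qed.

Section Factor.
Variables (N : Mod) (h : M -> N) (hh : is_hom h) (hk : forall x, S x -> h x = 0).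
Definition fact (q : quotM) : N := h (qrep q).
Lemma factE x : fact (proj x) = h x.
Proof. by apply/eqP; rewrite -subr_eq0 -(homB hh) hk //; exact: qrepE. Qed.
Lemma fact_hom : is_hom fact.
Proof.
split.
  by elim/quot_ind=> x; elim/quot_ind=> y; rewrite -(homD proj_hom) !factE (homD hh).
by move=> r; elim/quot_ind=> x; rewrite -(homZ proj_hom) !factE (homZ hh).
Qed.
End Factor.
End MQ.

Section SubM.
Variables (M : Mod) (S : M -> Prop) (hS : is_sub S).
Let X := {x : M | S x}.
Lemma sval_inj (a b : X) : proj1_sig a = proj1_sig b -> a = b.
Proof. by case: a => a pa; case: b => b pb /= e; apply: eq_exist. Qed.
Definition sz : X := exist _ 0 (let: And4 h _ _ _ := hS in h).
Definition sadd (a b : X) : X :=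
  exist _ (proj1_sig a + proj1_sig b) (let: And4 _ h _ _ := hS in h _ _ (proj2_sig a) (proj2_sig b)).
Definition sopp (a : X) : X :=
  exist _ (- proj1_sig a) (let: And4 _ _ h _ := hS in h _ (proj2_sig a)).
Definition ssc (a : X) (r : R) : X :=
  exist _ (ract (proj1_sig a) r) (let: And4 _ _ _ h := hS in h _ r (proj2_sig a)).
Lemma sA : associative sadd. Proof. by move=> *; apply: sval_inj; rewrite /= addrA. Qed.
Lemma sC : commutative sadd. Proof. by move=> *; apply: sval_inj; rewrite /= addrC. Qed.
Lemma s0 : left_id sz sadd. Proof. by move=> *; apply: sval_inj; rewrite /= add0r. Qed.
Lemma sN : left_inverse sz sopp sadd. Proof. by move=> *; apply: sval_inj; rewrite /= addNr. Qed.
Lemma ssA v a b : ssc (ssc v b) a = ssc v (b * a).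
Proof. by apply: sval_inj; rewrite /= ractA. Qed.
Lemma ss1 v : ssc v 1 = v. Proof. by apply: sval_inj; rewrite /= ract1. Qed.
Lemma ssDr a u v : ssc (sadd u v) a = sadd (ssc u a) (ssc v a).
Proof. by apply: sval_inj; rewrite /= ractDl. Qed.
Lemma ssDl v a b : ssc v (a + b) = sadd (ssc v a) (ssc v b).
Proof. by apply: sval_inj; rewrite /= ractDr. Qed.
Definition subM : Mod := mkMod sA sC s0 sN ssA ss1 ssDr ssDl.
Definition incl (x : subM) : M := proj1_sig x.
Lemma incl_hom : is_hom incl. Proof. by []. Qed.
Lemma incl_inj : injective incl. Proof. by move=> a b; apply: sval_inj. Qed.
Lemma incl_im x : S x -> exists y, incl y = x.
Proof. by move=> h; exists (exist _ x h). Qed.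
Lemma incl_S y : S (incl y). Proof. exact: proj2_sig. Qed.
End SubM.

Section ProdM.
Variables (I : Type) (M : I -> Mod).
Let X := forall i, M i.
Definition pz : X := fun i => 0.
Definition popp (x : X) : X := fun i => - x i.
Definition padd (x y : X) : X := fun i => x i + y i.
Definition psc (x : X) (r : R) : X := fun i => ract (x i) r.
Lemma pA : associative padd. Proof. by move=> *; apply: functional_extensionality_dep => i; rewrite /padd addrA. Qed.
Lemma pC : commutative padd. Proof. by move=> *; apply: functional_extensionality_dep => i; rewrite /padd addrC. Qed.
Lemma p0 : left_id pz padd. Proof. by move=> *; apply: functional_extensionality_dep => i; rewrite /padd add0r. Qed.
Lemma pN : left_inverse pz popp padd. Proof. by move=> *; apply: functional_extensionality_dep => i; rewrite /padd addNr. Qed.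
Lemma psA v a b : psc (psc v b) a = psc v (b * a).
Proof. by apply: functional_extensionality_dep => i; rewrite /psc ractA. Qed.
Lemma ps1 v : psc v 1 = v. Proof. by apply: functional_extensionality_dep => i; rewrite /psc ract1. Qed.
Lemma psDr a u v : psc (padd u v) a = padd (psc u a) (psc v a).
Proof. by apply: functional_extensionality_dep => i; rewrite /psc /padd ractDl. Qed.
Lemma psDl v a b : psc v (a + b) = padd (psc v a) (psc v b).
Proof. by apply: functional_extensionality_dep => i; rewrite /psc /padd ractDr. Qed.
Definition prodM : Mod := mkMod pA pC p0 pN psA ps1 psDr psDl.
Definition pi i (x : prodM) : M i := x i.
Lemma prodM_is_product : is_product pi.
Proof.
split; first by move=> i; split.
move=> Q q hq; exists (fun x i => q i x); split.
  split; first split.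
  - by move=> x y; apply: functional_extensionality_dep => i; rewrite (homD (hq i)).
  - by move=> r x; apply: functional_extensionality_dep => i; rewrite (homZ (hq i)).
  by [].
by move=> h' [_ e]; apply/funext => x; apply: functional_extensionality_dep => i; rewrite -e.
Qed.
End ProdM.
End Sub.


Section DL.
Variable R : nzRingType.
Local Notation Mod := (rmodType R).
Variables (I : Type) (le : I -> I -> Prop) (M : I -> Mod)
  (f : forall i j, le i j -> M i -> M j).
Hypothesis hD : directed_system f.

Lemma le_refl i : le i i. Proof. by case: hD. Qed.
Lemma le_trans i j k : le i j -> le j k -> le i k.
Proof. by case: hD => _ h _ _ _; apply: h. Qed.
Definition ub i j : I := proj1_sig (cid (let: And5 _ _ _ h _ := hD in h i j)).
Lemma ub_l i j : le i (ub i j). Proof. by rewrite /ub; case: cid => k []. Qed.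
Lemma ub_r i j : le j (ub i j). Proof. by rewrite /ub; case: cid => k []. Qed.
Definition i0 : I := proj1_sig (cid (let: And5 _ _ h _ _ := hD in
   match h with inhabits x => ex_intro (fun _ => True) x Logic.I end)).

Definition fT i k (x : M i) : M k :=
  match pselect (le i k) with left h => f h x | right _ => 0 end.
Lemma fTE i k (h : le i k) x : fT k x = f h x.
Proof. by rewrite /fT; case: pselect => // h'; rewrite (Prop_irrelevance h' h). Qed.
Lemma fT_hom i k : le i k -> is_hom (@fT i k).
Proof.
move=> h; case: hD => _ _ _ _ [hh _ _].
by split=> *; rewrite !(fTE h) ?(homD (hh _ _ h)) ?(homZ (hh _ _ h)).
Qed.
Lemma fT_id i x : fT i x = x.
Proof. by rewrite (fTE (le_refl i)); case: hD => _ _ _ _ [_ h _]; apply: h. Qed.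
Lemma fT_comp i j k x : le i j -> le j k -> fT k (fT j x : M j) = fT k (x : M i).
Proof.
move=> hij hjk; rewrite (fTE hij) (fTE hjk) (fTE (le_trans hij hjk)).
by case: hD => _ _ _ _ [_ _ h]; apply: h.
Qed.

Lemma bound_fin (m : nat) (s : 'I_m -> I) i : exists k, le i k /\ forall j, le (s j) k.
Proof.
elim: m s => [|m IH] s.
  by exists i; split; [exact: le_refl | case].
have [k [hik hk]] := IH (fun j => s (lift ord0 j)).
exists (ub k (s ord0)); split; first exact: le_trans hik (ub_l _ _).
move=> j; case: (unliftP ord0 j) => [j' ->|->]; last exact: ub_r.
exact: le_trans (hk j') (ub_l _ _).
Qed.

Definition X := {i : I & M i}.
Definition val_at (p : X) k : M k := fT k (tagged p).
Definition E (p q : X) := exists k, [/\ le (tag p) k, le (tag q) k & val_at p k = val_at q k].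

Lemma E_up p q k K : le (tag p) k -> le (tag q) k -> val_at p k = val_at q k -> le k K ->
  val_at p K = val_at q K.
Proof.
by move=> hp hq e hK; rewrite /val_at -(fT_comp _ hp hK) -(fT_comp _ hq hK) -!/(val_at _ _) e.
Qed.

Lemma Er p : E p p. Proof. by exists (tag p); split => //; exact: le_refl. Qed.
Lemma Es p q : E p q -> E q p. Proof. by move=> [k [? ? ?]]; exists k. Qed.
Lemma Et p q r : E p q -> E q r -> E p r.
Proof.
move=> [k [h1 h2 e]] [k' [h1' h2' e']]; exists (ub k k'); split.
- exact: le_trans h1 (ub_l _ _).
- exact: le_trans h2' (ub_r _ _).
by rewrite (E_up h1 h2 e (ub_l k k')) (E_up h1' h2' e' (ub_r k k')).
Qed.

Lemma E_same k (y y' : M k) : E (existT _ k y) (existT _ k y') <->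
   exists K, le k K /\ fT K y = fT K y'.
Proof. by split=> [[K [h _ e]]|[K [h e]]]; exists K. Qed.

Definition cT := tq E.
Definition at_ k (y : M k) : cT := cls E (existT _ k y).
Definition crep (c : cT) : X := rep c.
Lemma crepK c : at_ (tagged (crep c)) = c.
Proof. by rewrite /at_ /crep; move: (clsK c); case: (rep c). Qed.
Lemma c_ind (P : cT -> Prop) : (forall k y, P (@at_ k y)) -> forall c, P c.
Proof. by move=> h c; rewrite -(crepK c). Qed.
Lemma at_eq k k' (y : M k) (y' : M k') :
  at_ y = at_ y' <-> exists K, [/\ le k K, le k' K & fT K y = fT K y'].
Proof. exact: (cls_eq Er Es Et). Qed.
Lemma at_up k K (y : M k) : le k K -> at_ y = at_ (fT K y).
Proof.
move=> h; apply/at_eq; exists K; split=> //; first exact: le_refl.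
by rewrite fT_id.
Qed.
Lemma crep_E c : c = at_ (tagged (crep c)).
Proof. by rewrite crepK. Qed.

Definition xadd (p q : X) : X :=
  existT _ (ub (tag p) (tag q)) (fT _ (tagged p) + fT _ (tagged q)).
Definition cz : cT := at_ (0 : M i0).
Definition cadd (a b : cT) : cT := cls E (xadd (crep a) (crep b)).
Definition copp (a : cT) : cT := at_ (- tagged (crep a)).
Definition csc (a : cT) r : cT := at_ (ract (tagged (crep a)) r).

Lemma rep_at k (y : M k) : exists K, [/\ le (tag (crep (at_ y))) K, le k K &
   fT K (tagged (crep (at_ y))) = fT K y].
Proof. by apply/at_eq; rewrite crepK. Qed.

Lemma caddE k (y y' : M k) : cadd (at_ y) (at_ y') = at_ (y + y').
Proof.
have [K1 [h1 h1' e1]] := rep_at y; have [K2 [h2 h2' e2]] := rep_at y'.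
set p := crep (at_ y) in h1 e1 *; set q := crep (at_ y') in h2 e2 *.
rewrite /cadd -/p -/q /xadd.
set u := ub _ _.
set K := ub (ub K1 K2) u.
have hK1 : le K1 K := le_trans (ub_l K1 K2) (ub_l _ _).
have hK2 : le K2 K := le_trans (ub_r K1 K2) (ub_l _ _).
have huK : le u K := ub_r _ _.
apply/at_eq; exists K; split => //; first exact: le_trans h1' hK1.
rewrite (homD (fT_hom huK)) (fT_comp _ (ub_l _ _) huK) (fT_comp _ (ub_r _ _) huK).
rewrite -(fT_comp _ h1 hK1) -(fT_comp _ h2 hK2) e1 e2 !fT_comp //.
by rewrite (homD (fT_hom (le_trans h1' hK1))).
Qed.
Lemma coppE k (y : M k) : copp (at_ y) = at_ (- y).
Proof.
have [K [h h' e]] := rep_at y.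
apply/at_eq; exists K; split => //.
by rewrite (homN (fT_hom h)) (homN (fT_hom h')) e.
Qed.
Lemma cscE k (y : M k) r : csc (at_ y) r = at_ (ract y r).
Proof.
have [K [h h' e]] := rep_at y.
apply/at_eq; exists K; split => //.
by rewrite (homZ (fT_hom h)) (homZ (fT_hom h')) e.
Qed.
Lemma czE k : cz = at_ (0 : M k).
Proof.
rewrite /cz (at_up _ (ub_l i0 k)) (at_up (0 : M k) (ub_r i0 k)).
by rewrite (hom0 (fT_hom (ub_l _ _))) (hom0 (fT_hom (ub_r _ _))).
Qed.

Ltac common a b :=
  let h1 := fresh in let h2 := fresh in
  rewrite (at_up _ (ub_l a b)) (at_up _ (ub_r a b)).

Lemma cA : associative cadd.
Proof.
move=> a b c; elim/c_ind: a => i x; elim/c_ind: b => j y; elim/c_ind: c => k z.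
set K := ub (ub i j) k.
have hi : le i K := le_trans (ub_l i j) (ub_l _ _).
have hj : le j K := le_trans (ub_r i j) (ub_l _ _).
have hk : le k K := ub_r _ _.
by rewrite (at_up x hi) (at_up y hj) (at_up z hk) !caddE addrA.
Qed.
Lemma cC : commutative cadd.
Proof.
move=> a b; elim/c_ind: a => i x; elim/c_ind: b => j y.
by rewrite (at_up x (ub_l i j)) (at_up y (ub_r i j)) !caddE addrC.
Qed.
Lemma c0 : left_id cz cadd.
Proof. by move=> a; elim/c_ind: a => i x; rewrite (czE i) caddE add0r. Qed.
Lemma cN : left_inverse cz copp cadd.
Proof. by move=> a; elim/c_ind: a => i x; rewrite coppE caddE addNr (czE i). Qed.
Lemma csA v a b : csc (csc v b) a = csc v (b * a).
Proof. by elim/c_ind: v => i x; rewrite !cscE ractA. Qed.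
Lemma cs1 v : csc v 1 = v.
Proof. by elim/c_ind: v => i x; rewrite cscE ract1. Qed.
Lemma csDr a u v : csc (cadd u v) a = cadd (csc u a) (csc v a).
Proof.
elim/c_ind: u => i x; elim/c_ind: v => j y.
by rewrite (at_up x (ub_l i j)) (at_up y (ub_r i j)) !(caddE, cscE) ractDl.
Qed.
Lemma csDl v a b : csc v (a + b) = cadd (csc v a) (csc v b).
Proof. by elim/c_ind: v => i x; rewrite !(caddE, cscE) ractDr. Qed.

Definition colim : Mod := mkMod cA cC c0 cN csA cs1 csDr csDl.
Definition cin i (y : M i) : colim := at_ y.

Lemma cin_hom i : is_hom (@cin i).
Proof. by split=> *; rewrite /cin ?mk_addE ?mk_ractE ?caddE ?cscE. Qed.

Lemma colim_is_limit : is_direct_limit f cin.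
Proof.
split; first exact: cin_hom.
  by move=> i j h x; rewrite /cin (at_up x h) (fTE h).
move=> Q q hq hc.
have hcT i k (h : le i k) x : q k (fT k x) = q i x by rewrite (fTE h) hc.
pose u (c : colim) : Q := q _ (tagged (crep c)).
have uE k (y : M k) : u (at_ y) = q k y.
  rewrite /u; have [K [h h' e]] := rep_at y.
  by rewrite -(hcT _ _ h) e hcT.
exists u; split.
  split; [split|].
  - move=> a b; elim/c_ind: a => i x; elim/c_ind: b => j y.
    rewrite (at_up x (ub_l i j)) (at_up y (ub_r i j)) mk_addE caddE !uE.
    by rewrite (homD (hq _)).
  - by move=> r a; elim/c_ind: a => i x; rewrite mk_ractE cscE !uE (homZ (hq _)).
  - by move=> i x; rewrite /cin uE.
move=> u' [_ e]; apply/funext; elim/c_ind => i x.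
by rewrite uE -e.
Qed.

Lemma cin_eq i j (y : M i) (y' : M j) : cin y = cin y' ->
  exists k (hik : le i k) (hjk : le j k), f hik y = f hjk y'.
Proof.
move/at_eq => [K [h h' e]]; exists K, h, h'.
by rewrite -(fTE h) -(fTE h').
Qed.

Section Abstract.
Variables (L : Mod) (g : forall i, M i -> L).
Arguments g : clear implicits.
Hypothesis hL : is_direct_limit f g.

Lemma dl_maps : exists (u : L -> colim) (v : colim -> L),
  [/\ is_hom u, is_hom v, (forall i y, u (g i y) = cin y), (forall i y, v (cin y) = g i y)
    & forall x, v (u x) = x].
Proof.
have [hg hgc U] := hL.
have [hc hcc Uc] := colim_is_limit.
have [u [[hu ue] _]] := U colim cin hc hcc.
have [v [[hv ve] _]] := Uc L g hg hgc.
exists u, v; split => // x.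
have := unique_hom (U L g hg hgc) (hom_comp hu hv) _ (hom_id L) _.
move=> /(_ _ _) /(congr1 (fun h => h x)); apply.
- by move=> i y /=; rewrite ue ve.
- by [].
Qed.

Lemma dl_surj (x : L) : exists i y, g i y = x.
Proof.
have [u [v [hu hv ue ve uv]]] := dl_maps.
move: (uv x); elim/c_ind: (u x) => i y <-.
by exists i, y; rewrite -ve.
Qed.

Lemma dl_eq i j (y : M i) (y' : M j) : g i y = g j y' ->
  exists k (hik : le i k) (hjk : le j k), f hik y = f hjk y'.
Proof.
have [u [v [hu hv ue ve uv]]] := dl_maps.
by move/(congr1 u); rewrite !ue; apply: cin_eq.
Qed.

Lemma dl_eq0 i (y : M i) : g i y = 0 -> exists k (hik : le i k), f hik y = 0.
Proof.
move=> e; have [hg _ _] := hL.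
have := @dl_eq i i y 0; rewrite e (hom0 (hg i)) => /(_ erefl) [k [h [h2 e']]].
exists k, h; rewrite e'; case: hD => _ _ _ _ [hh _ _].
exact: (hom0 (hh _ _ _)).
Qed.
End Abstract.
End DL.


Section Torsion.
Variable R : nzRingType.
Local Notation Mod := (rmodType R).
Unset Implicit Arguments.
Variables (T F : Mod -> Prop) (t : forall M : Mod, M -> Prop).
Set Implicit Arguments.
Hypotheses (htp : torsion_pair T F) (htr : torsion_radical T t).

Lemma TF_zero (X N : Mod) (h : X -> N) : T X -> F N -> is_hom h -> forall x, h x = 0.
Proof. by move=> hX hN hh; apply: ((htp.1 X).1 hX N hN h hh). Qed.

Lemma T_crit (X : Mod) : (forall N, F N -> forall h : X -> N, is_hom h -> forall x, h x = 0) -> T X.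
Proof. exact: (htp.1 X).2. Qed.
Lemma F_crit (N : Mod) : (forall X, T X -> forall h : X -> N, is_hom h -> forall x, h x = 0) -> F N.
Proof. exact: (htp.2 N).2. Qed.

Lemma ker_sub (X M : Mod) (h : X -> M) : is_hom h -> is_sub (fun x : X => h x = 0).
Proof.
move=> hh; split.
- exact: hom0 hh.
- by move=> x y ex ey; rewrite (homD hh) ex ey addr0.
- by move=> x ex; rewrite (homN hh) ex oppr0.
- by move=> x r ex; rewrite (homZ hh) ex ract0l.
Qed.

Lemma t_image (X M : Mod) (h : X -> M) : T X -> is_hom h -> forall x, t M (h x).
Proof.
move=> hX hh x.
have hK := ker_sub hh.
pose Q := quotM hK.
pose hb := @fact _ _ _ hK _ h.
have hbh : is_hom hb := fact_hom hK hh (fun x e => e).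
have hbE y : hb (proj hK y) = h y := factE hK hh (fun x e => e) y.
have hinj : injective hb.
  elim/(@quot_ind _ _ _ hK) => a; elim/(@quot_ind _ _ _ hK) => b; rewrite !hbE => e.
  by apply/proj_eq; rewrite (homB hh) e subrr.
have TQ : T Q.
  apply: T_crit => N hN g hg; elim/(@quot_ind _ _ _ hK) => y.
  exact: (TF_zero hX hN (hom_comp (proj_hom hK) hg)).
by rewrite -hbE; apply: (htr M).2.
Qed.

Lemma t_fun (M N : Mod) (h : M -> N) x : is_hom h -> t M x -> t N (h x).
Proof.
move=> hh tx; have [X [i [hX hi ii e]]] := (htr M).1.
have [y <-] := (e x).1 tx.
exact: (t_image hX (hom_comp hi hh)).
Qed.

Lemma t_sub (M : Mod) : is_sub (t M).
Proof.
have [X [i [hX hi ii e]]] := (htr M).1.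
have ti y : t M (i y) by apply/e; exists y.
split.
- by rewrite -(hom0 hi).
- by move=> x y /e [a <-] /e [b <-]; rewrite -(homD hi).
- by move=> x /e [a <-]; rewrite -(homN hi).
- by move=> x r /e [a <-]; rewrite -(homZ hi).
Qed.

Lemma T_iff (M : Mod) : T M <-> forall x, t M x.
Proof.
split; first by move=> hM x; apply: ((htr M).2 M id hM (hom_id M) (fun a b e => e) x).
move=> all; have [X [i [hX hi ii e]]] := (htr M).1.
apply: T_crit => N hN g hg x; have [y <-] := (e x).1 (all x).
exact: (TF_zero hX hN (hom_comp hi hg)).
Qed.

Lemma F_iff (M : Mod) : F M <-> forall x, t M x -> x = 0.
Proof.
split.
  move=> hM x tx; have [X [i [hX hi ii e]]] := (htr M).1.
  have [y <-] := (e x).1 tx; exact: (TF_zero hX hM hi).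
move=> h0; apply: F_crit => X hX h hh x; apply: h0; exact: t_image.
Qed.

Lemma F_quot (M : Mod) : F (quotM (t_sub M)).
Proof.
set hS := t_sub M.
pose Q := quotM hS.
apply/F_iff => q tq.
have [m em] := proj_surj q; subst q.
pose Zp m := t Q (proj hS m).
have hZ : is_sub Zp.
  have hQ := t_sub Q; have hp := proj_hom hS.
  split; rewrite /Zp.
  - by rewrite (hom0 hp); case: hQ.
  - by move=> x y ??; rewrite (homD hp); case: hQ => _ h _ _; apply: h.
  - by move=> x ?; rewrite (homN hp); case: hQ => _ _ h _; apply: h.
  - by move=> x r ?; rewrite (homZ hp); case: hQ => _ _ _ h; apply: h.
pose Z := subM hZ.
suff TZ : T Z.
  have [z <-] := incl_im hZ tq.
  apply/proj0; exact: ((htr M).2 Z (@incl _ _ _ hZ) TZ (@incl_hom _ _ _ hZ) (@incl_inj _ _ _ hZ) z).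
apply: T_crit => N hN g hg z.
have gK (z' : Z) : t M (incl z') -> g z' = 0.
  have [X [i [hX hi ii e]]] := (htr M).1.
  move=> /e [x' ex'].
  have mem y : Zp (i y).
    rewrite /Zp; have /proj0 -> : t M (i y) by apply/e; exists y.
    by case: (t_sub Q).
  pose c (y : X) : Z := exist Zp (i y) (mem y).
  have hc : is_hom c.
    by split=> *; apply: sval_inj; rewrite /= ?(homD hi) ?(homZ hi).
  have -> : z' = c x' by apply: sval_inj; rewrite /= ex'.
  exact: (TF_zero hX hN (hom_comp hc hg)).
have [X [i [hX hi ii e]]] := (htr Q).1.
have ex (y : X) : exists m, proj hS m = i y.
  by have [m0 ->] := proj_surj (i y); exists m0.
pose mx (y : X) := proj1_sig (cid (ex y)).
have mxE y : proj hS (mx y) = i y by rewrite /mx; case: cid.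
have mem y : Zp (mx y) by rewrite /Zp mxE; apply/e; exists y.
pose c (y : X) : Z := exist Zp (mx y) (mem y).
have hp := proj_hom hS.
have hincl := @incl_hom _ _ _ hZ.
have key (a b : Z) : t M (incl (a - b)) -> g a = g b.
  move=> h; rewrite -[a](subrK b) (homD hg) gK ?add0r //.
have inclc y : incl (c y) = mx y by [].
have phi_hom : is_hom (fun y => g (c y)).
  split.
  - move=> x y /=; rewrite -(homD hg); apply: key.
    rewrite -(proj0 hS) (homB hincl) (homD hincl) !inclc (homB hp) (homD hp) !mxE (homD hi).
    by rewrite subrr.
  - move=> r x /=; rewrite -(homZ hg); apply: key.
    rewrite -(proj0 hS) (homB hincl) (homZ hincl) !inclc (homB hp) (homZ hp) !mxE (homZ hi).
    by rewrite subrr.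
have [y ey] := (e (proj hS (incl z))).1 (incl_S z).
have -> : z = c y + (z - c y) by rewrite addrC subrK.
rewrite (homD hg) (TF_zero hX hN phi_hom y) add0r gK //.
by rewrite -(proj0 hS) /= (homD hp) (homN hp) mxE ey subrr.
Qed.

End Torsion.


Section Pres.
Variable R : nzRingType.
Local Notation Mod := (rmodType R).
Variable M : Mod.

Definition WT := M -> R.
Definition wz : WT := fun _ => 0.
Definition wopp (v : WT) : WT := fun m => - v m.
Definition wadd (v w : WT) : WT := fun m => v m + w m.
Definition wsc (v : WT) (r : R) : WT := fun m => v m * r.
Lemma wA : associative wadd. Proof. by move=> *; apply/funext => i; rewrite /wadd addrA. Qed.
Lemma wC : commutative wadd. Proof. by move=> *; apply/funext => i; rewrite /wadd addrC. Qed.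
Lemma w0 : left_id wz wadd. Proof. by move=> *; apply/funext => i; rewrite /wadd /wz add0r. Qed.
Lemma wN : left_inverse wz wopp wadd. Proof. by move=> *; apply/funext => i; rewrite /wadd /wopp addNr. Qed.
Lemma wsA v a b : wsc (wsc v b) a = wsc v (b * a).
Proof. by apply/funext => i; rewrite /wsc mulrA. Qed.
Lemma ws1 v : wsc v 1 = v. Proof. by apply/funext => i; rewrite /wsc mulr1. Qed.
Lemma wsDr a u v : wsc (wadd u v) a = wadd (wsc u a) (wsc v a).
Proof. by apply/funext => i; rewrite /wsc /wadd mulrDl. Qed.
Lemma wsDl v a b : wsc v (a + b) = wadd (wsc v a) (wsc v b).
Proof. by apply/funext => i; rewrite /wsc /wadd mulrDr. Qed.
Definition W : Mod := mkMod wA wC w0 wN wsA ws1 wsDr wsDl.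
Definition ap (v : W) (m : M) : R := v m.
Lemma apD v w m : ap (v + w) m = ap v m + ap w m. Proof. by []. Qed.
Lemma apN v m : ap (- v) m = - ap v m. Proof. by []. Qed.
Lemma ap0 m : ap 0 m = 0. Proof. by []. Qed.
Lemma apZ v r m : ap (ract v r) m = ap v m * r. Proof. by []. Qed.
Lemma apB v w m : ap (v - w) m = ap v m - ap w m. Proof. by []. Qed.
Lemma ap_sum (I : Type) (s : seq I) (P : pred I) (F : I -> W) m :
  ap (\sum_(i <- s | P i) F i) m = \sum_(i <- s | P i) ap (F i) m.
Proof. exact: (big_morph (fun v => ap v m) (fun v w => apD v w m) (ap0 m)). Qed.
Lemma W_ext (v w : W) : (forall m, ap v m = ap w m) -> v = w.
Proof. by move=> h; apply/funext. Qed.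
Definition mkW (v : M -> R) : W := v.
Lemma ap_mkW v m : ap (mkW v) m = v m. Proof. by []. Qed.

Definition restr (G : seq M) (v : W) : W := mkW (fun m => if m \in G then ap v m else 0).
Lemma restr_hom G : is_hom (restr G).
Proof.
split=> *; apply: W_ext => m; rewrite /restr !(apD, apZ, ap_mkW);
  by case: ifP => _; rewrite ?addr0 ?mul0r.
Qed.
Definition ev (G : seq M) (v : W) : M := \sum_(x <- undup G) ract x (ap v x).
Lemma ev_hom G : is_hom (ev G).
Proof.
split=> *; rewrite /ev.
  by rewrite -big_split /=; apply: eq_bigr => x _; rewrite apD ractDr.
by rewrite ract_suml; apply: eq_bigr => x _; rewrite apZ ractA.
Qed.
Definition supp (v : W) (G : seq M) := forall m, m \notin G -> ap v m = 0.

Lemma restr_id G v : supp v G -> restr G v = v.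
Proof.
move=> h; apply: W_ext => m; rewrite /restr ap_mkW; case: ifP => // /negbT.
by move/h.
Qed.
Lemma restr_restr G G' v : {subset G <= G'} -> restr G' (restr G v) = restr G v.
Proof.
move=> s; apply: W_ext => m; rewrite /restr !ap_mkW.
by case mG: (m \in G); [rewrite (s _ mG) | case: ifP].
Qed.
Lemma supp_restr G v : supp (restr G v) G.
Proof. by move=> m /negbTE h; rewrite /restr ap_mkW h. Qed.

Lemma ev_restr G G' v : {subset G <= G'} -> ev G' (restr G v) = ev G v.
Proof.
move=> s; rewrite /ev.
rewrite (eq_bigr (fun x => if x \in G then ract x (ap v x) else 0)); last first.
  by move=> x _; rewrite /restr ap_mkW; case: ifP => _; rewrite ?ract0.
rewrite -big_mkcond /= -big_filter.
apply: perm_big; apply: uniq_perm; rewrite ?filter_uniq ?undup_uniq //.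
by move=> x; rewrite mem_filter !mem_undup; case xG: (x \in G) => //=; rewrite (s _ xG).
Qed.
Lemma ev_restr_same G v : ev G (restr G v) = ev G v.
Proof. exact: ev_restr. Qed.

Definition delta (m : M) : W := mkW (fun x => if x == m then 1 else 0).
Lemma ev_delta G m : m \in G -> ev G (delta m) = m.
Proof.
move=> mG; rewrite /ev (bigD1_seq m) ?undup_uniq ?mem_undup //=.
rewrite /delta ap_mkW eqxx ract1 big1 ?addr0 // => x /negbTE nx.
by rewrite ap_mkW nx ract0.
Qed.
Lemma supp_delta m G : m \in G -> supp (delta m) G.
Proof. by move=> mG x xG; rewrite /delta ap_mkW; case: eqP => // e; rewrite e mG in xG. Qed.

Definition Sp (Rel : seq W) (v : W) :=
  exists s : nat -> R, v = \sum_(l < size Rel) ract (nth 0 Rel l) (s l).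
Lemma Sp_sub Rel : is_sub (Sp Rel).
Proof.
split.
- by exists (fun _ => 0); rewrite big1 // => l _; rewrite ract0.
- move=> x y [s ->] [s' ->]; exists (fun l => s l + s' l).
  by rewrite -big_split; apply: eq_bigr => l _; rewrite ractDr.
- move=> x [s ->]; exists (fun l => - s l).
  by rewrite -sumrN; apply: eq_bigr => l _; rewrite ractNr.
- move=> x r [s ->]; exists (fun l => s l * r).
  by rewrite ract_suml; apply: eq_bigr => l _; rewrite ractA.
Qed.
Lemma Sp_nth Rel l : (l < size Rel)%N -> Sp Rel (nth 0 Rel l).
Proof.
move=> hl; exists (fun l' => if l' == l then 1 else 0).
rewrite (bigD1 (Ordinal hl)) //= eqxx ract1 big1 ?addr0 // => k /negbTE nk.
case: eqP => [e|_]; last by rewrite ract0.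
by move: nk; rewrite (_ : k = Ordinal hl) ?eqxx //; apply: val_inj.
Qed.
Lemma Sp_mono Rel Rel' v : (forall l, (l < size Rel)%N -> Sp Rel' (nth 0 Rel l)) ->
  Sp Rel v -> Sp Rel' v.
Proof.
move=> h [s ->]; have [h0 hD _ hZ] := Sp_sub Rel'.
by apply: (big_ind (Sp Rel')) => // l _; apply: hZ; apply: h.
Qed.
Lemma Sp_hom (N : Mod) (H : W -> N) Rel v : is_hom H ->
  (forall l, (l < size Rel)%N -> H (nth 0 Rel l) = 0) -> Sp Rel v -> H v = 0.
Proof.
move=> hH h [s ->]; rewrite (hom_sum hH) big1 // => l _.
by rewrite (homZ hH) h // ract0l.
Qed.

Definition valid (p : seq M * seq W) :=
  forall l, (l < size p.2)%N -> supp (nth 0 p.2 l) p.1 /\ ev p.1 (nth 0 p.2 l) = 0.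
Definition J := {p : seq M * seq W | valid p}.
Definition JG (i : J) := (proj1_sig i).1.
Definition JR (i : J) := (proj1_sig i).2.
Definition jle (i j : J) :=
  {subset JG i <= JG j} /\ forall l, (l < size (JR i))%N -> Sp (JR j) (nth 0 (JR i) l).

Definition Si (i : J) (v : W) := Sp (JR i) (restr (JG i) v).
Lemma Si_sub i : is_sub (Si i).
Proof.
have hr := restr_hom (JG i); have [h0 hD hN hZ] := Sp_sub (JR i).
split; rewrite /Si.
- by rewrite (hom0 hr).
- by move=> x y ? ?; rewrite (homD hr); apply: hD.
- by move=> x ?; rewrite (homN hr); apply: hN.
- by move=> x r ?; rewrite (homZ hr); apply: hZ.
Qed.
Definition Mi (i : J) : Mod := quotM (Si_sub i).
Definition pj (i : J) (v : W) : Mi i := proj (Si_sub i) v.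
Lemma pj_hom i : is_hom (pj i). Proof. exact: proj_hom. Qed.
Lemma pj_restr i v : pj i (restr (JG i) v) = pj i v.
Proof.
apply/proj_eq; rewrite /Si (homB (restr_hom _)) restr_restr // subrr.
by case: (Sp_sub (JR i)).
Qed.
Lemma pj0 i v : Sp (JR i) (restr (JG i) v) -> pj i v = 0.
Proof. by move=> h; apply/proj0. Qed.

Lemma fi_kill i j : jle i j -> forall v, Si i v -> (pj j \o restr (JG i)) v = 0.
Proof.
move=> [s hR] v hv; apply: pj0 => /=; rewrite restr_restr //.
exact: Sp_mono hR hv.
Qed.
Lemma fi_hom' i j : is_hom (pj j \o restr (JG i)).
Proof. exact: hom_comp (restr_hom _) (pj_hom j). Qed.
Definition fi (i j : J) (h : jle i j) : Mi i -> Mi j :=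
  @fact _ _ _ (Si_sub i) _ (pj j \o restr (JG i)).
Lemma fiE i j (h : jle i j) v : fi h (pj i v) = pj j (restr (JG i) v).
Proof. exact: (factE (Si_sub i) (fi_hom' i j) (fi_kill h)). Qed.
Lemma fi_hom i j (h : jle i j) : is_hom (fi h).
Proof. exact: (fact_hom (Si_sub i) (fi_hom' i j) (fi_kill h)). Qed.

Lemma Mi_ind i (P : Mi i -> Prop) : (forall v, P (pj i v)) -> forall x, P x.
Proof. exact: quot_ind. Qed.

Lemma ev_supp G G' v : supp v G -> {subset G <= G'} -> ev G' v = ev G v.
Proof. by move=> hs sub; rewrite -(restr_id hs) ev_restr // (restr_id hs). Qed.

Definition j0 : J := exist valid ([::], [::]) (fun l (h : (l < 0)%N) => False_ind _ (notF h)).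

Definition jub_p (i j : J) : seq M * seq W := (JG i ++ JG j, JR i ++ JR j).
Lemma jub_valid i j : valid (jub_p i j).
Proof.
move=> l; rewrite /jub_p /= size_cat nth_cat => hl.
have sub1 : {subset JG i <= JG i ++ JG j} by move=> x; rewrite mem_cat => ->.
have sub2 : {subset JG j <= JG i ++ JG j} by move=> x; rewrite mem_cat orbC => ->.
case: ifP => hli.
  have [hs he] := proj2_sig i l hli; split; last by rewrite (ev_supp hs sub1).
  by move=> m; rewrite mem_cat negb_or => /andP [/hs].
have hl' : (l - size (JR i) < size (JR j))%N by rewrite ltn_subLR // leqNgt hli.
have [hs he] := proj2_sig j _ hl'; split; last by rewrite (ev_supp hs sub2).
by move=> m; rewrite mem_cat negb_or => /andP [_ /hs].
Qed.
Definition jub (i j : J) : J := exist valid (jub_p i j) (@jub_valid i j).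

Lemma jle_refl i : jle i i.
Proof. by split=> // l hl; apply: Sp_nth. Qed.
Lemma jle_trans i j k : jle i j -> jle j k -> jle i k.
Proof.
move=> [s1 r1] [s2 r2]; split; first by move=> x /s1 /s2.
by move=> l hl; apply: Sp_mono r2 (r1 l hl).
Qed.
Lemma jub_l i j : jle i (jub i j).
Proof.
split; first by move=> x; rewrite /jub /JG /= mem_cat => ->.
move=> l hl; rewrite /JR /=.
have -> : nth 0 (proj1_sig i).2 l = nth 0 ((proj1_sig i).2 ++ (proj1_sig j).2) l.
  by rewrite nth_cat hl.
by apply: Sp_nth; rewrite size_cat ltn_addr.
Qed.
Lemma jub_r i j : jle j (jub i j).
Proof.
split; first by move=> x; rewrite /jub /JG /= mem_cat orbC => ->.
move=> l hl; rewrite /JR /=.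
have -> : nth 0 (proj1_sig j).2 l =
  nth 0 ((proj1_sig i).2 ++ (proj1_sig j).2) (size (proj1_sig i).2 + l).
  by rewrite nth_cat ltnNge leq_addr /= addKn.
by apply: Sp_nth; rewrite size_cat ltn_add2l.
Qed.

Lemma pres_directed : directed_system fi.
Proof.
split.
- exact: jle_refl.
- exact: jle_trans.
- exact: (inhabits j0).
- by move=> i j; exists (jub i j); split; [apply: jub_l | apply: jub_r].
split.
- exact: fi_hom.
- by move=> i h; elim/Mi_ind => v; rewrite fiE pj_restr.
- move=> i j k hij hjk hik; elim/Mi_ind => v.
  by rewrite !fiE restr_restr //; case: hij.
Qed.

Lemma gi_kill i v : Si i v -> ev (JG i) v = 0.
Proof.
move=> h; rewrite -ev_restr_same; apply: (Sp_hom (ev_hom _) _ h).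
by move=> l hl; have [_ ->] := proj2_sig i l hl.
Qed.
Definition gi (i : J) : Mi i -> M := @fact _ _ _ (Si_sub i) _ (ev (JG i)).
Lemma giE i v : gi (pj i v) = ev (JG i) v.
Proof. exact: (factE (Si_sub i) (ev_hom _) (@gi_kill i)). Qed.
Lemma gi_hom i : is_hom (@gi i).
Proof. exact: (fact_hom (Si_sub i) (ev_hom _) (@gi_kill i)). Qed.


Lemma jm_valid (m : M) : valid ([:: m], [::]).
Proof. by []. Qed.
Definition jm (m : M) : J := exist valid ([:: m], [::]) (@jm_valid m).
Lemma jle_single k m : m \in JG k -> jle (jm m) k.
Proof. by move=> h; split => // x; rewrite /jm /JG /= inE => /eqP ->. Qed.

Lemma mkJ_valid G (r : W) : supp r G -> ev G r = 0 -> valid (G, [:: r]).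
Proof. by move=> hs he [|l] //. Qed.
Definition mkJ G r hs he : J := exist valid (G, [:: r]) (@mkJ_valid G r hs he).

Lemma restr_delta_sum G v :
  \sum_(x <- undup G) ract (delta x) (ap v x) = restr G v.
Proof.
apply: W_ext => m; rewrite ap_sum /restr ap_mkW.
case: ifP => mG.
  rewrite (bigD1_seq m) ?undup_uniq ?mem_undup //= apZ /delta ap_mkW eqxx mul1r.
  rewrite big1 ?addr0 // => x nx; rewrite apZ ap_mkW.
  by case: eqP => [e|]; [rewrite e eqxx in nx | rewrite mul0r].
rewrite big_seq big1 // => x; rewrite mem_undup => xG.
rewrite apZ ap_mkW; case: eqP => [e|]; last by rewrite mul0r.
by rewrite e xG in mG.
Qed.

Lemma pres_limit : is_direct_limit fi gi.
Proof.
split.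
- exact: gi_hom.
- move=> i j h; elim/Mi_ind => v; rewrite fiE !giE ev_restr //; by case: h.
move=> Q q hq hc.
pose u (m : M) : Q := q (jm m) (pj (jm m) (delta m)).
have uG k m : m \in JG k -> u m = q k (pj k (delta m)).
  move=> mk; rewrite /u -(hc _ _ (jle_single mk)) fiE restr_id //.
  by apply: supp_delta; rewrite /jm /JG /= inE.
have qrel (G : seq M) (r : W) (hs : supp r G) (he : ev G r = 0) : q (mkJ hs he) (pj (mkJ hs he) r) = 0.
  have -> : pj (mkJ hs he) r = 0.
    apply: pj0; rewrite /JG /JR /= restr_id //.
    exact: (@Sp_nth [:: r] 0 isT).
  exact: hom0 (hq _).
have hu : is_hom u.
  split.
  - move=> m m'.
    pose G := [:: m; m'; m + m'].
    pose r := delta (m + m') - (delta m + delta m').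
    have g1 : m \in G by rewrite /G inE eqxx.
    have g2 : m' \in G by rewrite /G !inE eqxx ?orbT.
    have g3 : m + m' \in G by rewrite /G !inE eqxx ?orbT.
    have hs : supp r G.
      move=> x xG; have sd y : y \in G -> ap (delta y) x = 0 by move=> hy; exact: supp_delta hy x xG.
      by rewrite /r apB apD (sd _ g1) (sd _ g2) (sd _ g3) addr0 subrr.
    have he : ev G r = 0.
      by rewrite /r (homB (ev_hom _)) (homD (ev_hom _)) !ev_delta ?subrr.
    pose k := mkJ hs he.
    have hk := qrel _ _ hs he.
    rewrite /r (homB (pj_hom _)) (homD (pj_hom _)) (homB (hq _)) (homD (hq _)) in hk.
    have mk y : y \in G -> y \in JG k by [].
    rewrite (uG k _ (mk _ g3)) (uG k _ (mk _ g1)) (uG k _ (mk _ g2)).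
    by apply/eqP; rewrite -subr_eq0 hk.
  - move=> r m.
    pose G := [:: m; ract m r].
    pose rr := delta (ract m r) - ract (delta m) r.
    have g1 : m \in G by rewrite /G inE eqxx.
    have g2 : ract m r \in G by rewrite /G !inE eqxx ?orbT.
    have hs : supp rr G.
      move=> x xG; have sd y : y \in G -> ap (delta y) x = 0 by move=> hy; exact: supp_delta hy x xG.
      by rewrite /rr apB apZ (sd _ g1) (sd _ g2) mul0r subrr.
    have he : ev G rr = 0.
      by rewrite /rr (homB (ev_hom _)) (homZ (ev_hom _)) !ev_delta ?subrr.
    pose k := mkJ hs he.
    have hk := qrel _ _ hs he.
    rewrite /rr (homB (pj_hom _)) (homZ (pj_hom _)) (homB (hq _)) (homZ (hq _)) in hk.
    have mk y : y \in G -> y \in JG k by [].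
    rewrite (uG k _ (mk _ g2)) (uG k _ (mk _ g1)).
    by apply/eqP; rewrite -subr_eq0 hk.
exists u; split.
  split => // i; elim/Mi_ind => v; rewrite giE /ev (hom_sum hu).
  rewrite big_seq (eq_bigr (fun x => ract (q i (pj i (delta x))) (ap v x))); last first.
    by move=> x; rewrite mem_undup => xG; rewrite (homZ hu) (uG i).
  rewrite -big_seq.
  rewrite (eq_bigr (fun x => q i (pj i (ract (delta x) (ap v x))))); last first.
    by move=> x _; rewrite (homZ (pj_hom _)) (homZ (hq _)).
  by rewrite -(hom_sum (hq i)) -(hom_sum (pj_hom i)) restr_delta_sum pj_restr.
move=> u' [hu' e]; apply/funext => m.
have := e (jm m) (pj (jm m) (delta m)).
by rewrite giE ev_delta ?inE // => ->.
Qed.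

Lemma pres_pp i (y : Mi i) : exists tau : ppf R, pp_holds tau (gi y) /\
  forall (N : Mod) (u : N), pp_holds tau u -> exists h : Mi i -> N, is_hom h /\ h y = u.
Proof.
elim/Mi_ind: y => c.
pose G := JG i; pose Gs := undup G; pose a := size Gs.
pose Rel := JR i; pose b := size Rel.
pose gen (j : 'I_a) := nth 0 Gs j.
have genG j : gen j \in G by rewrite -mem_undup mem_nth.
pose tau := @PPF R a b.+1 (fun k => if (k : nat) == 0%N then 1 else 0)
  (fun j k => if (k : nat) == 0%N then - ap c (gen j) else ap (nth 0 Rel k.-1) (gen j)).
have evE v : ev G v = \sum_(j < a) ract (gen j) (ap v (gen j)).
  by rewrite /ev -/Gs (big_nth 0) big_mkord.
exists tau; split.
  exists gen => k; rewrite /= giE.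
  case: eqP => [hk0|hk].
    rewrite ract1 -/G evE -big_split big1 // => j _; rewrite ractNr; exact: subrr.
  have hl : (k.-1 < size Rel)%N by move: (ltn_ord k); case: (k : nat) hk => // n _.
  by rewrite ract0 add0r -evE; have [_ ->] := proj2_sig i _ hl.
move=> N u [w hw].
pose H (v : W) : N := \sum_(j < a) ract (w j) (ap v (gen j)).
have hH : is_hom H.
  split=> *; rewrite /H.
    by rewrite -big_split /=; apply: eq_bigr => j _; rewrite apD ractDr.
  by rewrite ract_suml; apply: eq_bigr => j _; rewrite apZ ractA.
have Hrestr v : H (restr G v) = H v.
  by apply: eq_bigr => j _; rewrite /restr ap_mkW genG.
have kill v : Si i v -> H v = 0.
  move=> hv; rewrite -Hrestr; apply: (Sp_hom hH _ hv) => l hl.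
  have := hw (@Ordinal b.+1 l.+1 hl); rewrite /= ract0 add0r => <-.
  by [].
exists (@fact _ _ _ (Si_sub i) _ H); split; first exact: (fact_hom (Si_sub i) hH kill).
rewrite (factE (Si_sub i) hH kill).
have := hw (@Ordinal b.+1 0 isT); rewrite /= ract1 => /eqP.
rewrite addr_eq0 => /eqP ->; rewrite -sumrN; apply: eq_bigr => j _.
by rewrite ractNr opprK.
Qed.

End Pres.


Section PP.
Variable R : nzRingType.
Local Notation Mod := (rmodType R).
Variable tau : ppf R.

Lemma pp_prod (I : Type) (M : I -> Mod) (P : Mod) (p : forall i, P -> M i) x :
  is_product p -> (forall i, pp_holds tau (p i x)) -> pp_holds tau x.
Proof.
move=> hP hx.
pose wi i := proj1_sig (cid (hx i)).
have hwi i k : ract (p i x) (pp_a k) + \sum_(j < pp_m tau) ract (wi i j) (pp_b j k) = 0.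
  by rewrite /wi; case: cid.
pose W j := proj1_sig (cid (prod_exists hP (fun i => wi i j))).
have hW i j : p i (W j) = wi i j by rewrite /W; case: cid.
exists W => k; apply: (prod_ext hP) => i.
rewrite (homD (hP.1 i)) (homZ (hP.1 i)) (hom_sum (hP.1 i)) (hom0 (hP.1 i)).
rewrite -[RHS](hwi i k); congr (_ + _); apply: eq_bigr => j _.
by rewrite (homZ (hP.1 i)) hW.
Qed.

Lemma pp_dl (I : Type) (le : I -> I -> Prop) (M : I -> Mod)
  (f : forall i j, le i j -> M i -> M j) (L : Mod) (g : forall i, M i -> L) x :
  directed_system f -> is_direct_limit f g -> pp_holds tau x ->
  exists k y, g k y = x /\ pp_holds tau y.
Proof.
move=> hD hL hx.
have [hg hgc _] := hL.
have gfT i k (h : le i k) y : g k (fT f k y) = g i y by rewrite (fTE f h) hgc.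
have [i [y ey]] := dl_surj hD hL x; rewrite -ey in hx *.
have [w hw] := hx.
have Hz : forall j, exists p : {i : I & M i}, g _ (tagged p) = w j.
  by move=> j; have [i' [z ez]] := dl_surj hD hL (w j); exists (existT _ i' z).
have [zp hzp] := choice Hz.
have [K [hiK hK]] := bound_fin hD (fun j => tag (zp j)) i.
pose y' := fT f K y.
pose z' j := fT f K (tagged (zp j)).
pose e k := ract y' (pp_a k) + \sum_(j < pp_m tau) ract (z' j) (pp_b j k).
have ge k : g K (e k) = 0.
  rewrite -(hw k) (homD (hg K)) (homZ (hg K)) (hom_sum (hg K)) /y' (gfT _ _ hiK).
  congr (_ + _); apply: eq_bigr => j _; rewrite (homZ (hg K)) /z' gfT ?hK //.
  by rewrite hzp.
have HK : forall k, exists K', le K K' /\ fT f K' (e k) = 0.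
  move=> k; have [K' [h e0]] := dl_eq0 hD hL (ge k).
  by exists K'; rewrite (fTE f h).
have [Kf hKf] := choice HK.
have [K' [hKK' hK']] := bound_fin hD Kf K.
exists K', (fT f K' y'); split; first by rewrite (gfT _ _ hKK') /y' (gfT _ _ hiK).
exists (fun j => fT f K' (z' j)) => k.
have hh := fT_hom hD hKK'.
have -> : ract (fT f K' y') (pp_a k) + \sum_(j < pp_m tau) ract (fT f K' (z' j)) (pp_b j k)
   = fT f K' (e k).
  rewrite /e (homD hh) (homZ hh) (hom_sum hh); congr (_ + _).
  by apply: eq_bigr => j _; rewrite (homZ hh).
have [h1 h2] := hKf k.
by rewrite -(fT_comp hD _ h1 (hK' k)) h2 (hom0 (fT_hom hD (hK' k))).
Qed.
End PP.


Section Main.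
Variable R : nzRingType.
Local Notation Mod := (rmodType R).
Unset Implicit Arguments.
Variables (T F : Mod -> Prop) (t : forall M : Mod, M -> Prop).
Set Implicit Arguments.
Hypotheses (htp : torsion_pair T F) (htr : torsion_radical T t).

Section WithTau.
Variable tau : ppf R.
Hypothesis ht : forall (M : Mod) (x : M), t M x <-> pp_holds tau x.

Lemma TP (M : Mod) : T M <-> forall u : M, pp_holds tau u.
Proof.
rewrite (T_iff htp htr M); split=> h u; first by apply/ht.
by apply/ht.
Qed.
Lemma FP (M : Mod) : F M <-> forall u : M, pp_holds tau u -> u = 0.
Proof.
rewrite (F_iff htp htr M); split=> h u hu; first by apply: h; apply/ht.
by apply: h; apply/ht.
Qed.

Lemma C_to_A : elementary T F.
Proof.
split; split.
- move=> I M P p hP hM; apply/TP => x; apply: pp_prod hP _ => i.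
  exact: (TP _).1 (hM i) _.
- move=> M N i hM hi ii hpure; apply/TP => u.
  have [w hw] := (TP M).1 hM (i u).
  have s1 : forall k : 'I_(pp_n tau), exists y, i y = - ract (i u) (pp_a k).
    by move=> k; exists (- ract u (pp_a k)); rewrite (homN hi) (homZ hi).
  have s2 : exists x : 'I_(pp_m tau) -> M, forall k : 'I_(pp_n tau), \sum_(j < pp_m tau) ract (x j) (pp_b j k) = - ract (i u) (pp_a k).
    exists w => k; apply/eqP; rewrite -addr_eq0 addrC; apply/eqP; exact: hw.
  have [x [hxS hx]] := hpure (pp_m tau) (pp_n tau) (@pp_b R tau)
      (fun k => - ract (i u) (pp_a k)) s1 s2.
  have hx' j : exists y, i y = x j by [].
  pose x' j := proj1_sig (cid (hx' j)).
  have ex' j : i (x' j) = x j by rewrite /x'; case: cid.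
  exists x' => k; apply: ii.
  rewrite (hom0 hi) (homD hi) (homZ hi) (hom_sum hi).
  under eq_bigr do rewrite (homZ hi) ex'.
  by rewrite hx subrr.
- move=> I le M f L g hD hL hM; apply/TP => x.
  have [i [y <-]] := dl_surj hD hL x.
  apply: pp_hom; first by case: hL.
  exact: (TP _).1 (hM i) y.
- move=> I M P p hP hM; apply/FP => x hx; apply: (prod_ext hP) => i.
  rewrite (hom0 (hP.1 i)); exact: ((FP _).1 (hM i) _ (pp_hom (hP.1 i) hx)).
- move=> M N i hM hi ii hpure; apply/FP => u hu; apply: ii.
  rewrite (hom0 hi); exact: ((FP M).1 hM (i u) (pp_hom hi hu)).
- move=> I le M f L g hD hL hM; apply/FP => x hx.
  have [k [y [<- hy]]] := pp_dl hD hL hx.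
  rewrite ((FP _).1 (hM k) y hy); apply: hom0; by case: hL.
Qed.

Lemma C_to_B : coherent_subfunctor t.
Proof.
split.
  move=> I M P p hP; split; first by move=> x y _ _; apply: (prod_ext hP).
  move=> y hy; have [x hx] := prod_exists hP y.
  exists x; split => //; apply/ht; apply: pp_prod hP _ => i.
  by rewrite hx; apply/ht; exact: hy.
move=> I le M f L g hD hL; split.
  move=> x /ht hx; have [k [y [e hy]]] := pp_dl hD hL hx.
  by exists k, y; split => //; apply/ht.
by move=> i j y y' _ _ e; exact: (dl_eq hD hL e).
Qed.

Lemma part3 : (forall M : Mod, T M <-> forall u : M, pp_holds tau u) /\
     (forall M : Mod, F M <-> forall u : M, pp_holds tau u -> u = 0).
Proof. by split=> M; [exact: TP | exact: FP]. Qed.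
End WithTau.

Lemma A_to_B : elementary T F -> coherent_subfunctor t.
Proof.
move=> [[Tprod Tpure Tdl] [Fprod Fpure Fdl]].
split.
  move=> I M P p hP; split; first by move=> x y _ _; apply: (prod_ext hP).
  move=> y hy.
  have H' i : exists q : {X : Mod & X -> M i}, [/\ T (tag q), is_hom (tagged q),
      injective (tagged q) & forall x, t (M i) x <-> exists y, tagged q y = x].
    by have [X [e he]] := (htr (M i)).1; exists (existT _ X e).
  pose Xe i := proj1_sig (cid (H' i)).
  have hXe i := proj2_sig (cid (H' i)).
  pose X i := tag (Xe i).
  pose e i : X i -> M i := tagged (Xe i).
  have TX i : T (X i) by case: (hXe i).
  have he i : is_hom (e i) by case: (hXe i).
  have ie i : injective (e i) by case: (hXe i).
  have te i x : t (M i) x <-> exists y, e i y = x by case: (hXe i).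
  pose Q := prodM X.
  have hQ := prodM_is_product X.
  have TQ : T Q := Tprod _ _ _ _ hQ TX.
  have [h [[hh hph] _]] := hP.2 Q (fun i z => e i (pi i z))
     (fun i => hom_comp (hQ.1 i) (he i)).
  have hinj : injective h.
    move=> z z' ez; apply: functional_extensionality_dep => i.
    apply: (ie i); have := hph i z; rewrite ez hph => <-; by [].
  have hz i : exists a, e i a = y i by apply/te.
  pose z : Q := fun i => proj1_sig (cid (hz i)).
  exists (h z); split; first exact: ((htr P).2 Q h TQ hh hinj z).
  by move=> i; rewrite hph /pi /z; case: cid.
move=> I le M f L g hD hL; split; last by move=> i j y y' _ _ e; exact: (dl_eq hD hL e).
have [hle htr' hinh hdir [hfh hid hcomp]] := hD.
have [hg hgc U] := hL.
pose hS (i : I) := t_sub htr (M i).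
pose N (i : I) := quotM (hS i).
have kill i j (h : le i j) : forall x, t (M i) x -> (proj (hS j) \o f i j h) x = 0.
  by move=> x tx; apply/proj0; exact: (t_fun htp htr (hfh _ _ h) tx).
have khom i j (h : le i j) : is_hom (proj (hS j) \o f i j h) :=
  hom_comp (hfh _ _ h) (proj_hom _).
pose fq i j (h : le i j) : N i -> N j := @fact _ _ _ (hS i) _ (proj (hS j) \o f i j h).
have fqE i j (h : le i j) x : fq i j h (proj (hS i) x) = proj (hS j) (f i j h x).
  exact: (factE (hS i) (khom i j h) (kill i j h)).
have hDq : directed_system fq.
  split => //; split.
  - by move=> i j h; exact: (fact_hom (hS i) (khom i j h) (kill i j h)).
  - by move=> i h; elim/(@quot_ind _ _ _ (hS i)) => x; rewrite fqE hid.
  - move=> i j k hij hjk hik; elim/(@quot_ind _ _ _ (hS i)) => x.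
    by rewrite !fqE hcomp.
have hC := colim_is_limit hDq.
have FC : F (colim hDq) := Fdl _ _ _ _ _ _ hDq hC (fun i => F_quot htp htr (M i)).
have [cq cqc _] := hC.
have compat : forall (i j : I) (h : le i j) (x : M i),
    cin hDq (proj (hS j) (f i j h x)) = cin hDq (proj (hS i) x).
  by move=> i j h x /=; rewrite -fqE cqc.
have [pi' [[hpi hpie] _]] := U (colim hDq) (fun i y => cin hDq (proj (hS i) y))
   (fun i => hom_comp (proj_hom _) (cq i)) compat.
move=> x tx.
have [i [y ey]] := dl_surj hD hL x; subst x.
have : pi' (g i y) = 0.
  exact: ((F_iff htp htr _).1 FC _ (t_fun htp htr hpi tx)).
rewrite hpie => /(dl_eq0 hDq hC) [k [h /eqP]].
rewrite fqE => /eqP /proj0 tk.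
by exists k, (f i k h y); split => //; rewrite hgc.
Qed.

Lemma B_to_C : coherent_subfunctor t -> exists tau : ppf R,
  forall (M : Mod) (x : M), t M x <-> pp_holds tau x.
Proof.
move=> [hBp hBd].
pose good (phi : ppf R) := forall (N : Mod) (u : N), pp_holds phi u -> t N u.
have step1 (M : Mod) (x : M) : t M x -> exists phi, good phi /\ pp_holds phi x.
  move=> tx.
  have [H1 _] := hBd _ _ _ _ M _ (pres_directed M) (pres_limit M).
  have [i [y [ty <-]]] := H1 x tx.
  have [phi [hp hh]] := pres_pp y.
  exists phi; split => // N u /hh [h [hhom <-]].
  exact: (t_fun htp htr hhom ty).
case: (pselect (exists phi, good phi /\ forall (N : Mod) (x : N), t N x -> pp_holds phi x)).
  by move=> [phi [g1 g2]]; exists phi => M x; split; [apply: g2 | apply: g1].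
move=> nex; exfalso.
pose I := {phi : ppf R | good phi}.
have H (p : I) : exists q : {N : Mod & N}, t (tag q) (tagged q) /\ ~ pp_holds (sval p) (tagged q).
  apply: contrapT => nH; apply: nex; exists (sval p); split; first exact: (proj2_sig p).
  move=> N x tx; apply: contrapT => npp; apply: nH; by exists (existT _ N x); split.
have [Nx hNx] := choice H.
pose Nf p := tag (Nx p).
pose xf p : Nf p := tagged (Nx p).
have hP := prodM_is_product Nf.
have [_ H2] := hBp I Nf (prodM Nf) (@pi _ _ Nf) hP.
have [z [tz ez]] := H2 xf (fun p => (hNx p).1).
have [psi [gpsi ppsi]] := step1 _ z tz.
pose p : I := exist good psi gpsi.
have := pp_hom (hP.1 p) ppsi; rewrite ez.
exact: (hNx p).2.
Qed.

End Main.

Theorem theorem1p4_main (R : nzRingType) (T F : rmodType R -> Prop)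
    (t : forall M : rmodType R, M -> Prop) :
  torsion_pair T F -> torsion_radical T t ->
  (elementary T F <-> coherent_subfunctor t) /\
  (elementary T F <-> exists tau : ppf R, forall (M : rmodType R) (x : M),
      t M x <-> pp_holds tau x) /\
  (forall tau : ppf R, (forall (M : rmodType R) (x : M), t M x <-> pp_holds tau x) ->
     (forall M : rmodType R, T M <-> forall u : M, pp_holds tau u) /\
     (forall M : rmodType R, F M <-> forall u : M, pp_holds tau u -> u = 0)).
Proof.
move=> htp htr; split; [|split].
- split; first exact: A_to_B.
  by move=> /(B_to_C htp htr) [tau ht]; exact: C_to_A ht.
- split; first by move=> hA; exact: B_to_C htp htr (A_to_B htp htr hA).
  by move=> [tau ht]; exact: C_to_A ht.
- by move=> tau ht; exact: (@part3 R T F t htp htr tau ht).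
Qed.


Unset Implicit Arguments.
Set Strict Implicit.
Set Printing Implicit Defensive.

Theorem theorem1p4 (R : nzRingType) (T F : rmodType R -> Prop)
    (t : forall M : rmodType R, M -> Prop) :
  torsion_pair T F -> torsion_radical T t ->
  (elementary T F <-> coherent_subfunctor t) /\
  (elementary T F <-> exists tau : ppf R, forall (M : rmodType R) (x : M),
      t M x <-> pp_holds tau x) /\
  (forall tau : ppf R, (forall (M : rmodType R) (x : M), t M x <-> pp_holds tau x) ->
     (forall M : rmodType R, T M <-> forall u : M, pp_holds tau u) /\
     (forall M : rmodType R, F M <-> forall u : M, pp_holds tau u -> u = 0)).
Proof.
exact: theorem1p4_main.
Qed.
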